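(* Every leafless directed forest thinner than a forkless directed forest is forkless.
   Context: A directed forest is a pair $\mathcal{T}=(V,\mathsf{p})$ where $V$ is a nonempty set and $\mathsf{p}\colon V\to V$ satisfies: if $n\in\mathbb{N}$, $v\in V$ and $\mathsf{p}^n(v)=v$, then $\mathsf{p}(v)=v$. Roots: $\mathrm{root}(\mathcal{T})=\{v:\mathsf{p}(v)=v\}$, $V^\circ=V\setminus\mathrm{root}(\mathcal{T})$. Children: $\mathrm{Chi}(v)=\{u:\mathsf{p}(u)=v\neq u\}$, $\deg(v)=|\mathrm{Chi}(v)|$. $\mathcal{T}$ is leafless if $\mathsf{p}(V)=V$, and forkless if $\deg(v)=1$ for every $v\in V^\circ$. $(V,\mathsf{p}_1)$ is thinner than $(V,\mathsf{p}_2)$ if $\mathsf{p}_1(v)\in\{v,\mathsf{p}_2(v)\}$ for all $v\in V$. *)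

(* Defs.v *)
From Stdlib Require Import Arith.

Definition is_forest {V : Type} (p : V -> V) : Prop :=
  forall (n : nat) (v : V), Nat.iter (S n) p v = v -> p v = v.
(* n ranges over positive naturals: n = S n'; with n = 0 the condition would be vacuous-false *)

Definition directed_forest (V : Type) (p : V -> V) : Prop :=
  inhabited V /\ is_forest p.

Definition is_root {V : Type} (p : V -> V) (v : V) : Prop := p v = v.

Definition is_child {V : Type} (p : V -> V) (v u : V) : Prop := p u = v /\ v <> u.

Definition deg_eq_one {V : Type} (p : V -> V) (v : V) : Prop :=
  exists u, is_child p v u /\ forall w, is_child p v w -> w = u.

Definition leafless {V : Type} (p : V -> V) : Prop :=
  forall v : V, exists u : V, p u = v.

Definition forkless {V : Type} (p : V -> V) : Prop :=
  forall v : V, ~ is_root p v -> deg_eq_one p v.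

Definition thinner {V : Type} (p1 p2 : V -> V) : Prop :=
  forall v : V, p1 v = v \/ p1 v = p2 v.

(* Main.v *)
Require Import Defs.

Theorem lemma5p3 (V : Type) (p1 p2 : V -> V) :
  directed_forest V p1 -> directed_forest V p2 ->
  leafless p1 -> forkless p2 -> thinner p1 p2 ->
  forkless p1.
Proof.
  intros _ _ Hl Hf Ht v Hv.
  unfold is_root in Hv.
  destruct (Hl v) as [u Hu].
  assert (Hv2 : ~ is_root p2 v).
  { unfold is_root; intro H. destruct (Ht v) as [E|E]; congruence. }
  destruct (Hf v Hv2) as [c [[Hc1 Hc2] Huniq]].
  assert (Hch : forall w, is_child p1 v w -> w = c).
  { intros w [Hw1 Hw2]. apply Huniq. split; [|exact Hw2].
    destruct (Ht w) as [E|E].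
    - exfalso. apply Hw2. congruence.
    - congruence. }
  exists u. assert (Hcu : is_child p1 v u).
  { split; [exact Hu|]. intro E. apply Hv. congruence. }
  split; [exact Hcu|].
  intros w Hw. rewrite (Hch w Hw), (Hch u Hcu). reflexivity.
Qed.
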